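(* Let $H$ be an admissible Hamiltonian with vector field $f$ and $\mathcal H=\nabla^2H$, and let $\Pi(x)=J(x)-\varepsilon^2J(x)\mathcal HJ(x)\mathcal HJ(x)$. Then, with $\tilde x=\Phi_f(x,\varepsilon)$, $$d\Phi_f(x)\,\Pi(x)\,\big(d\Phi_f(x)\big)^T=\Pi(\tilde x)$$ wherever the map is defined.
   Context: Fix an integer $n\ge 2$. Points of $\mathbb R^{2n}$ are $x=(x_1,\dots,x_{2n})^{T}$; write $u=(x_1,\dots,x_n)^T$. Let $X(u)$ be the $n\times n$ matrix with entries $X(u)_{ij}=x_{k}$ where $k\in\{1,\dots,n\}$, $k\equiv i+j-1 \pmod n$, and let $J(x)=\begin{pmatrix}0&X(u)\\-X(u)&0\end{pmatrix}$ (a skew-symmetric $2n\times 2n$ matrix depending linearly on $x$). Let $\mathcal P$ be the $n\times n$ cyclic shift matrix ($\mathcal P_{i,i+1}=1$ for $1\le i\le n-1$, $\mathcal P_{n,1}=1$, all other entries $0$) and $A=\begin{pmatrix}\mathcal P&0\\0&\mathcal P\end{pmatrix}$. An admissible Hamiltonian is a homogeneous quadratic form $H(x)=\tfrac12 x^T\mathcal H x$ with a constant symmetric matrix $\mathcal H=\nabla^2H$ satisfying $A\mathcal H=\mathcal H A^T$; its Hamiltonian vector field is $f(x)=J(x)\nabla H(x)$ and $f'(x)$ denotes the Jacobi matrix of $f$. Kahan map: for a vector field $f$ whose components are homogeneous quadratic polynomials and a parameter $\varepsilon$, the Kahan map is $\Phi_f(x,\varepsilon)=(I-\varepsilon f'(x))^{-1}x$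 (defined wherever $I-\varepsilon f'(x)$ is invertible); it is the solution $\tilde x$ of $\frac{\tilde x-x}{2\varepsilon}=2f(\frac{x+\tilde x}{2})-\frac12f(x)-\frac12 f(\tilde x)$; $d\Phi_f(x)$ denotes its Jacobi matrix with respect to $x$. *)

(* Defs.v *)
(* Vectors in R^(2n) are functions nat -> R (only indices < 2n matter),
   matrices are functions nat -> nat -> R (only indices < 2n matter).
   All indices are 0-based. *)
From Stdlib Require Import Reals Arith.
Open Scope R_scope.

Definition vec := nat -> R.
Definition mat := nat -> nat -> R.

Fixpoint sumR (N : nat) (g : nat -> R) : R :=
  match N with
  | O => 0
  | S k => sumR k g + g k
  end.

Definition mmul (N : nat) (A B : mat) : mat :=
  fun i j => sumR N (fun k => A i k * B k j).
Definition mvec (N : nat) (A : mat) (v : vec) : vec :=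
  fun i => sumR N (fun k => A i k * v k).
Definition trans (A : mat) : mat := fun i j => A j i.
Definition idm : mat := fun i j => if Nat.eqb i j then 1 else 0.
Definition msub (A B : mat) : mat := fun i j => A i j - B i j.
Definition mscal (c : R) (A : mat) : mat := fun i j => c * A i j.

Definition invertible (N : nat) (A : mat) : Prop :=
  exists M : mat, forall i j, (i < N)%nat -> (j < N)%nat ->
    mmul N M A i j = idm i j /\ mmul N A M i j = idm i j.

(* X(u)_{ij} = x_k, k = i+j-1 mod n (1-based)  <=>  (i+j) mod n (0-based) *)
Definition Xmat (n : nat) (x : vec) : mat :=
  fun i j => x ((i + j) mod n)%nat.

Definition Jmat (n : nat) (x : vec) : mat :=
  fun i j =>
    if (i <? n)%nat then
      (if (j <? n)%nat then 0 else Xmat n x i (j - n)%nat)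
    else
      (if (j <? n)%nat then - Xmat n x (i - n)%nat j else 0).

Definition Pshift (n : nat) : mat :=
  fun i j => if Nat.eqb j ((i + 1) mod n)%nat then 1 else 0.

Definition Ablock (n : nat) : mat :=
  fun i j =>
    if (i <? n)%nat then
      (if (j <? n)%nat then Pshift n i j else 0)
    else
      (if (j <? n)%nat then 0 else Pshift n (i - n)%nat (j - n)%nat).

Definition admissible (n : nat) (Hm : mat) : Prop :=
  (forall i j, (i < 2*n)%nat -> (j < 2*n)%nat -> Hm i j = Hm j i) /\
  (forall i j, (i < 2*n)%nat -> (j < 2*n)%nat ->
     mmul (2*n) (Ablock n) Hm i j = mmul (2*n) Hm (trans (Ablock n)) i j).

(* gradient of H(x) = 1/2 x^T Hm x, Hm symmetric *)
Definition gradH (n : nat) (Hm : mat) (x : vec) : vec := mvec (2*n) Hm x.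

Definition fvf (n : nat) (Hm : mat) (x : vec) : vec :=
  mvec (2*n) (Jmat n x) (gradH n Hm x).

Definition unitv (j : nat) : vec := fun k => if Nat.eqb k j then 1 else 0.

(* Jacobi matrix of f: since J is linear in x,
   d f_i / d x_j = (J(e_j) Hm x)_i + (J(x) Hm)_{ij} *)
Definition fjac (n : nat) (Hm : mat) (x : vec) : mat :=
  fun i j => mvec (2*n) (Jmat n (unitv j)) (gradH n Hm x) i
             + mmul (2*n) (Jmat n x) Hm i j.

Definition kahanMat (n : nat) (Hm : mat) (eps : R) (x : vec) : mat :=
  msub idm (mscal eps (fjac n Hm x)).

(* Phi is (a realization of) the Kahan map x |-> (I - eps f'(x))^{-1} x
   on its domain of definition *)
Definition isKahanMap (n : nat) (Hm : mat) (eps : R) (Phi : vec -> vec) : Prop :=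
  forall y : vec, invertible (2*n) (kahanMat n Hm eps y) ->
    forall i, (i < 2*n)%nat -> mvec (2*n) (kahanMat n Hm eps y) (Phi y) i = y i.

Definition isJacobian (n : nat) (F : vec -> vec) (x : vec) (D : mat) : Prop :=
  forall i j, (i < 2*n)%nat -> (j < 2*n)%nat ->
    derivable_pt_lim
      (fun t => F (fun k => x k + (if Nat.eqb k j then t else 0)) i) 0 (D i j).

Definition PiMat (n : nat) (Hm : mat) (eps : R) (x : vec) : mat :=
  let J := Jmat n x in
  msub J (mscal (eps ^ 2)
    (mmul (2*n) J (mmul (2*n) Hm (mmul (2*n) J (mmul (2*n) Hm J))))).

(* Main.v *)
Require Import Defs.
From Stdlib Require Import Reals Arith.
From HB Require Import structures.
From mathcomp Require ssreflect ssrfun ssrbool eqtype ssrnat seq fintype bigop ssralg ssrnum poly matrix.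
From mathcomp Require Rstruct.

Module MC.
Import ssreflect ssrfun ssrbool eqtype ssrnat seq fintype bigop ssralg ssrnum poly matrix Rstruct.
Import GRing.Theory Num.Theory.

Lemma sumR_big N (g : nat -> R) : sumR N g = (\sum_(k < N) g k)%R.
Proof.
elim: N => [|N IH] /=; first by rewrite big_ord0.
by rewrite big_ord_recr /= IH.
Qed.

Definition mx N (A : mat) : 'M[R]_N := \matrix_(i < N, j < N) A i j.

Lemma idmE N (i j : 'I_N) : idm i j = ((i == j)%:R)%R.
Proof.
rewrite /idm; case: (PeanoNat.Nat.eqb_spec i j) => [/val_inj -> | H].
  by rewrite eqxx.
by case: eqP => // Hij; exfalso; apply: H; rewrite Hij.
Qed.

Lemma mmul_mx N (A B : mat) (i j : 'I_N) : mmul N A B i j = (mx N A *m mx N B)%R i j.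
Proof.
rewrite /mmul sumR_big !mxE; apply: eq_bigr => k _; by rewrite !mxE.
Qed.

Lemma inv_near_mc N (K B : mat) : invertible N K ->
  exists d, Rlt 0 d /\ forall t, Rlt (Rabs t) d ->
    invertible N (fun i j => Rminus (K i j) (Rmult t (B i j))).
Proof.
case: N => [|N'] .
  move=> _; exists R1; split; first exact: Rlt_0_1.
  by move=> t _; exists (fun _ _ => 0%R) => i j Hi; inversion Hi.
set N := N'.+1.
move=> [M HM].
have HMK : (mx N M *m mx N K = 1%:M)%R.
  apply/matrixP => i j; rewrite -mmul_mx mxE -idmE.
  by have [H1 _] := HM i j (ltP (ltn_ord i)) (ltP (ltn_ord j)).
have [_ HK] := mulmx1_unit HMK.
pose P : 'M[{poly R}]_N := (\matrix_(i, j) ((K i j)%:P - (B i j)%:P * 'X))%R.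
pose p := (\det P)%R.
have Hp : forall t, (\det (mx N (fun i j => Rminus (K i j) (Rmult t (B i j)))))%R = p.[t]%R.
  move=> t; rewrite /p -horner_evalE -det_map_mx; congr (\det _)%R.
  apply/matrixP => i j; rewrite !mxE /= horner_evalE !hornerE /=.
  by rewrite [(B i j * t)%R]mulrC.
have Hcont : continuity (fun t => p.[t]%R).
  apply: (continuity_eq (f := fun t => (\sum_(i < size p) p`_i * t ^+ i)%R)).
    by move=> t; rewrite horner_coef.
  apply: continuity_sum => i _.
  apply: continuity_mult; first exact: continuity_const.
  apply: continuity_exp; exact: (derivable_continuous _ derivable_id).
have Hp0 : p.[0]%R <> 0.
  rewrite -(Hp 0); move: HK; rewrite unitmxE unitfE => /eqP HK.
  move=> H0; apply: HK. rewrite -[X in _ = X]H0; congr (\det _)%R; apply/matrixP => i j.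
  by rewrite !mxE Rmult_0_l Rminus_0_r.
have Hpos : Rlt 0 (Rabs p.[0]%R) by apply: Rabs_pos_lt.
have [alp [Halp Hal]] := Hcont 0 _ Hpos.
exists alp; split; first exact: Halp.
move=> t Ht.
have Hpt : p.[t]%R <> 0.
  case: (Req_dec t 0) => [-> // | Ht0].
  have := Hal t; rewrite /= /R_dist /D_x => H.
  have {}H := H (conj (conj I (nesym Ht0)) _).
  move=> Hz; rewrite Hz in H.
  move: (H ltac:(by rewrite Rminus_0_r)); rewrite Rminus_0_l Rabs_Ropp; apply: Rlt_irrefl.
set Kt := (fun i j : nat => Rminus (K i j) (Rmult t (B i j))).
have HU : mx N Kt \in unitmx by rewrite unitmxE unitfE Hp; apply/eqP.
exists (fun i j => invmx (mx N Kt) (inord i) (inord j)) => i j Hi Hj.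
have Hi' : (i < N)%N by apply/ltP.
have Hj' : (j < N)%N by apply/ltP.
have -> : i = (@inord N' i : nat) by rewrite inordK.
have -> : j = (@inord N' j : nat) by rewrite inordK.
rewrite !mmul_mx !idmE.
have -> : mx N (fun i0 j0 : nat => invmx (mx N Kt) (inord i0) (inord j0)) = invmx (mx N Kt).
  by apply/matrixP => a b; rewrite !mxE !inord_val.
by rewrite mulVmx // mulmxV // !mxE.
Qed.
End MC.

From Stdlib Require Import Reals Arith Lia Lra Setoid Morphisms Ring FunctionalExtensionality.
Open Scope R_scope.

Lemma sumR_ext N f g : (forall k, (k < N)%nat -> f k = g k) -> sumR N f = sumR N g.
Proof. induction N; simpl; intros H; [reflexivity|]. rewrite IHN by (intros; apply H; lia). rewrite H by lia. reflexivity. Qed.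

Lemma sumR_plus N f g : sumR N (fun k => f k + g k) = sumR N f + sumR N g.
Proof. induction N; simpl; [ring|]. rewrite IHN; ring. Qed.

Lemma sumR_scal N c f : sumR N (fun k => c * f k) = c * sumR N f.
Proof. induction N; simpl; [ring|]. rewrite IHN; ring. Qed.

Lemma sumR_scal_r N c f : sumR N (fun k => f k * c) = sumR N f * c.
Proof. induction N; simpl; [ring|]. rewrite IHN; ring. Qed.

Lemma sumR_opp N f : sumR N (fun k => - f k) = - sumR N f.
Proof. induction N; simpl; [ring|]. rewrite IHN; ring. Qed.

Lemma sumR_zero N : sumR N (fun _ => 0) = 0.
Proof. induction N; simpl; [ring|]. rewrite IHN; ring. Qed.

Lemma sumR_swap N M f :
  sumR N (fun i => sumR M (fun j => f i j)) = sumR M (fun j => sumR N (fun i => f i j)).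
Proof.
induction N; simpl. { symmetry; apply sumR_zero. }
rewrite IHN, <- sumR_plus. reflexivity.
Qed.

Lemma sumR_add_len a b g : sumR (a + b) g = sumR a g + sumR b (fun k => g (a + k)%nat).
Proof.
induction b; simpl. { rewrite Nat.add_0_r; ring. }
rewrite Nat.add_succ_r; simpl. rewrite IHb; ring.
Qed.

Lemma sumR_first k g : sumR (S k) g = g 0%nat + sumR k (fun m => g (S m)).
Proof.
induction k; simpl. { ring. }
simpl in IHk. rewrite IHk. ring.
Qed.

Lemma sumR_delta N t h : (t < N)%nat ->
  sumR N (fun k => (if Nat.eqb k t then 1 else 0) * h k) = h t.
Proof.
induction N; intros Ht; [lia|]. simpl.
destruct (Nat.eq_dec t N) as [->|Hne].
- rewrite Nat.eqb_refl.
  rewrite (sumR_ext _ _ (fun _ => 0)). { rewrite sumR_zero. ring. }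
  intros k Hk. destruct (Nat.eqb_spec k N); [lia|ring].
- rewrite IHN by lia. destruct (Nat.eqb_spec N t); [lia|ring].
Qed.

Lemma sumR_rev k G : sumR k (fun m => G (k - 1 - m)%nat) = sumR k G.
Proof.
revert G; induction k; intros G; [reflexivity|].
rewrite sumR_first.
rewrite (sumR_ext k (fun m => G (S k - 1 - S m)%nat) (fun m => G (k - 1 - m)%nat)) by (intros; f_equal; lia).
rewrite IHk. replace (S k - 1 - 0)%nat with k by lia. simpl. ring.
Qed.

Section G.
Variable n : nat.
Hypothesis Hn : (0 < n)%nat.

Definition md k := (k mod n)%nat.

Lemma md_lt k : (md k < n)%nat.
Proof. unfold md. apply Nat.mod_upper_bound; lia. Qed.

Lemma md_cases a : (a < 2 * n)%nat ->
  ((a < n)%nat /\ md a = a) \/ ((n <= a)%nat /\ md a = (a - n)%nat).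
Proof.
intros H. destruct (Nat.lt_ge_cases a n).
- left; split; auto. unfold md; apply Nat.mod_small; auto.
- right; split; auto. unfold md.
  replace a with ((a - n) + 1 * n)%nat at 1 by lia.
  rewrite Nat.mod_add by lia. apply Nat.mod_small; lia.
Qed.

Ltac md_solve :=
  repeat match goal with
  | |- context [md ?a] =>
      lazymatch a with
      | context [md _] => fail
      | _ => let H := fresh "Hm" in
             destruct (md_cases a ltac:(pose proof (md_lt 0); lia)) as [[H ->]|[H ->]]
      end
  end; lia.

Lemma md_add_l c m : md (c + m) = md (md c + m).
Proof. unfold md. rewrite Nat.add_mod_idemp_l by lia. reflexivity. Qed.

Lemma md_small k : (k < n)%nat -> md k = k.
Proof. intros; unfold md; apply Nat.mod_small; auto. Qed.

Lemma md_n : md n = 0%nat.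
Proof. unfold md; apply Nat.mod_same; lia. Qed.

Lemma sum_shift1 F : sumR n (fun m => F (md (1 + m))) = sumR n F.
Proof.
assert (E : n = S (n - 1)) by lia. rewrite E at 1 2.
rewrite (sumR_first (n-1) F). simpl sumR.
rewrite (sumR_ext (n-1) (fun m => F (md (S m))) (fun m => F (S m))).
2:{ intros k Hk. rewrite md_small by lia. reflexivity. }
replace (S (n - 1)) with n by lia. rewrite md_n. ring.
Qed.

Lemma sum_shift c F : sumR n (fun m => F (md (c + m))) = sumR n F.
Proof.
revert F; induction c; intros F.
- apply sumR_ext; intros; simpl; rewrite md_small; auto.
- rewrite <- (IHc F). rewrite <- (sum_shift1 (fun m => F (md (c + m)))).
  apply sumR_ext; intros k Hk. f_equal. unfold md.
  rewrite Nat.add_mod_idemp_r by lia. f_equal. lia.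
Qed.

Lemma sum_refl c F : sumR n (fun m => F (md (n + c - m))) = sumR n F.
Proof.
rewrite <- sumR_rev.
rewrite <- (sum_shift (S c) F).
apply sumR_ext; intros k Hk. f_equal. f_equal. lia.
Qed.

Definition geq (u v : vec) := forall k, (k < n)%nat -> u k = v k.
Definition gadd (u v : vec) : vec := fun k => u k + v k.
Definition gopp (u : vec) : vec := fun k => - u k.
Definition gsub (u v : vec) : vec := fun k => u k - v k.
Definition g0 : vec := fun _ => 0.
Definition g1 : vec := fun k => if Nat.eqb k 0 then 1 else 0.
Definition gmul (u v : vec) : vec := fun k => sumR n (fun m => u m * v (md (n + k - m))).
Definition gcj (u : vec) : vec := fun k => u (md (n - k)).

Lemma geq_equiv : Equivalence geq.
Proof.
split; unfold geq; intros u; auto.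
- intros v H k Hk; rewrite H; auto.
- intros v w H1 H2 k Hk; rewrite H1, H2; auto.
Qed.
Global Existing Instance geq_equiv.

Global Instance gadd_prop : Proper (geq ==> geq ==> geq) gadd.
Proof. intros u u' Hu v v' Hv k Hk; unfold gadd; rewrite Hu, Hv; auto. Qed.
Global Instance gopp_prop : Proper (geq ==> geq) gopp.
Proof. intros u u' Hu k Hk; unfold gopp; rewrite Hu; auto. Qed.
Global Instance gsub_prop : Proper (geq ==> geq ==> geq) gsub.
Proof. intros u u' Hu v v' Hv k Hk; unfold gsub; rewrite Hu, Hv; auto. Qed.
Global Instance gmul_prop : Proper (geq ==> geq ==> geq) gmul.
Proof.
intros u u' Hu v v' Hv k Hk; unfold gmul. apply sumR_ext; intros m Hm.
rewrite Hu, Hv; auto. apply md_lt.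
Qed.
Global Instance gcj_prop : Proper (geq ==> geq) gcj.
Proof. intros u u' Hu k Hk; unfold gcj; rewrite Hu; auto. apply md_lt. Qed.

Lemma gmul_comm u v : geq (gmul u v) (gmul v u).
Proof.
intros k Hk; unfold gmul.
rewrite <- (sum_refl k (fun m => v m * u (md (n + k - m)))).
apply sumR_ext; intros m Hm.
replace (md (n + k - md (n + k - m))) with m by md_solve. ring.
Qed.

Lemma gmul_assoc u v w : geq (gmul u (gmul v w)) (gmul (gmul u v) w).
Proof.
intros k Hk; unfold gmul.
rewrite (sumR_ext n (fun m => sumR n (fun l => u l * v (md (n + m - l))) * w (md (n + k - m)))
   (fun m => sumR n (fun l => u l * v (md (n + m - l)) * w (md (n + k - m))))).
2:{ intros; rewrite <- sumR_scal_r; reflexivity. }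
rewrite sumR_swap. apply sumR_ext; intros l Hl.
rewrite <- sumR_scal.
rewrite <- (sum_shift l (fun m => u l * v (md (n + m - l)) * w (md (n + k - m)))).
apply sumR_ext; intros m Hm.
replace (md (n + md (l + m) - l)) with m by md_solve.
replace (md (n + k - md (l + m))) with (md (n + md (n + k - l) - m)) by md_solve.
ring.
Qed.

Lemma gmul_1 u : geq (gmul g1 u) u.
Proof.
intros k Hk; unfold gmul, g1.
rewrite (sumR_delta n 0 (fun m => u (md (n + k - m)))) by lia.
f_equal; md_solve.
Qed.

Lemma gmul_distr u v w : geq (gmul (gadd u v) w) (gadd (gmul u w) (gmul v w)).
Proof.
intros k Hk; unfold gmul, gadd. rewrite <- sumR_plus. apply sumR_ext; intros; ring.
Qed.

Lemma G_ring : ring_theory g0 g1 gadd gmul gsub gopp geq.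
Proof.
constructor; try (intros; intros k Hk; unfold gadd, gopp, gsub, g0; ring).
- intros; apply gmul_1.
- intros; apply gmul_comm.
- intros; apply gmul_assoc.
- intros; apply gmul_distr.
Qed.

Lemma G_ext : ring_eq_ext gadd gmul gopp geq.
Proof. constructor; [exact gadd_prop | exact gmul_prop | exact gopp_prop]. Qed.

Add Ring Gring : G_ring (setoid geq_equiv G_ext).

Lemma gcj_add u v : geq (gcj (gadd u v)) (gadd (gcj u) (gcj v)).
Proof. intros k Hk; reflexivity. Qed.
Lemma gcj_opp u : geq (gcj (gopp u)) (gopp (gcj u)).
Proof. intros k Hk; reflexivity. Qed.
Lemma gcj_sub u v : geq (gcj (gsub u v)) (gsub (gcj u) (gcj v)).
Proof. intros k Hk; reflexivity. Qed.
Lemma gcj_g1 : geq (gcj g1) g1.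
Proof.
intros k Hk; unfold gcj, g1.
destruct (Nat.eqb_spec (md (n - k)) 0); destruct (Nat.eqb_spec k 0); auto; exfalso; revert e n0; md_solve.
Qed.
Lemma gcj_gcj u : geq (gcj (gcj u)) u.
Proof. intros k Hk; unfold gcj. f_equal. md_solve. Qed.
Lemma gcj_mul u v : geq (gcj (gmul u v)) (gmul (gcj u) (gcj v)).
Proof.
intros k Hk; unfold gcj, gmul.
rewrite <- (sum_refl 0 (fun m => u m * v (md (n + md (n - k) - m)))).
apply sumR_ext; intros m Hm. rewrite Nat.add_0_r.
replace (md (n - m)) with (md (n - m)) by reflexivity.
replace (md (n + md (n - k) - md (n - m))) with (md (n - md (n + k - m))) by md_solve.
reflexivity.
Qed.

Definition ge (c : R) : vec := fun k => if Nat.eqb k 0 then c else 0.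
Lemma ge_mul c v : geq (gmul (ge c) v) (fun k => c * v k).
Proof.
intros k Hk; unfold gmul, ge.
rewrite (sumR_ext n _ (fun m => (if Nat.eqb m 0 then 1 else 0) * (c * v (md (n + k - m))))).
2:{ intros m Hm; destruct (Nat.eqb m 0); ring. }
rewrite sumR_delta by lia. f_equal; f_equal; md_solve.
Qed.
Lemma gcj_ge c : geq (gcj (ge c)) (ge c).
Proof.
intros k Hk; unfold gcj, ge.
destruct (Nat.eqb_spec (md (n - k)) 0); destruct (Nat.eqb_spec k 0); auto; exfalso; revert e n0; md_solve.
Qed.

Definition ginner (p q : vec) := sumR n (fun k => p k * q k).
Lemma ginner_ext p p' q q' : geq p p' -> geq q q' -> ginner p q = ginner p' q'.
Proof. intros H1 H2; unfold ginner; apply sumR_ext; intros k Hk; rewrite H1, H2; auto. Qed.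
Lemma ginner_add_l p p' q : ginner (gadd p p') q = ginner p q + ginner p' q.
Proof. unfold ginner, gadd; rewrite <- sumR_plus; apply sumR_ext; intros; ring. Qed.
Lemma ginner_add_r p q q' : ginner p (gadd q q') = ginner p q + ginner p q'.
Proof. unfold ginner, gadd; rewrite <- sumR_plus; apply sumR_ext; intros; ring. Qed.
Lemma ginner_opp_l p q : ginner (gopp p) q = - ginner p q.
Proof. unfold ginner, gopp; rewrite <- sumR_opp; apply sumR_ext; intros; ring. Qed.
Lemma ginner_opp_r p q : ginner p (gopp q) = - ginner p q.
Proof. unfold ginner, gopp; rewrite <- sumR_opp; apply sumR_ext; intros; ring. Qed.
Lemma gadj g p q : ginner (gmul g p) q = ginner p (gmul (gcj g) q).
Proof.
rewrite (ginner_ext _ _ q q (gmul_comm g p)) by reflexivity.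
unfold ginner, gmul, gcj.
rewrite (sumR_ext n _ (fun k => sumR n (fun l => p l * (g (md (n + k - l)) * q k)))).
2:{ intros k Hk. rewrite <- sumR_scal_r. apply sumR_ext; intros; ring. }
rewrite sumR_swap. apply sumR_ext; intros l Hl.
rewrite sumR_scal. f_equal.
rewrite <- (sum_refl l (fun k => g (md (n + k - l)) * q k)).
apply sumR_ext; intros m Hm.
replace (md (n + md (n + l - m) - l)) with (md (n - m)) by md_solve. reflexivity.
Qed.

Lemma md_md k : md (md k) = md k.
Proof. unfold md. apply Nat.mod_mod; lia. Qed.

Definition shift (v : vec) : vec := fun k => v (n + k)%nat.

Lemma sum2n g : sumR (2 * n) g = sumR n g + sumR n (fun k => g (n + k)%nat).
Proof. replace (2 * n)%nat with (n + n)%nat by lia. apply sumR_add_len. Qed.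

Lemma X1 g v i : (i < n)%nat ->
  sumR n (fun k => g (md (i + k)) * v k) = gmul g (gcj v) i.
Proof.
intros Hi. unfold gmul, gcj.
rewrite <- (sum_shift (n - i) (fun k => g (md (i + k)) * v k)).
apply sumR_ext; intros m Hm.
replace (md (i + md (n - i + m))) with m by md_solve.
replace (md (n - i + m)) with (md (n - md (n + i - m))) by md_solve.
reflexivity.
Qed.

Lemma J_lo y v i : (i < n)%nat -> mvec (2 * n) (Jmat n y) v i = gmul y (gcj (shift v)) i.
Proof.
intros Hi. unfold mvec. rewrite sum2n. rewrite <- X1 by auto.
unfold Jmat, Xmat, shift.
rewrite (sumR_ext n _ (fun _ => 0)).
2:{ intros k Hk. destruct (Nat.ltb_spec i n); [|lia]. destruct (Nat.ltb_spec k n); [|lia]. ring. }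
rewrite sumR_zero, Rplus_0_l. apply sumR_ext; intros k Hk.
destruct (Nat.ltb_spec i n); [|lia]. destruct (Nat.ltb_spec (n + k) n); [lia|].
replace (n + k - n)%nat with k by lia. reflexivity.
Qed.

Lemma J_hi y v i : (i < n)%nat -> mvec (2 * n) (Jmat n y) v (n + i)%nat = - gmul y (gcj v) i.
Proof.
intros Hi. unfold mvec. rewrite sum2n. rewrite <- X1 by auto.
unfold Jmat, Xmat.
rewrite (sumR_ext n (fun k => _ * v (n + k)%nat) (fun _ => 0)).
2:{ intros k Hk. destruct (Nat.ltb_spec (n + i) n); [lia|]. destruct (Nat.ltb_spec (n + k) n); [lia|]. ring. }
rewrite sumR_zero, Rplus_0_r. rewrite <- sumR_opp. apply sumR_ext; intros k Hk.
destruct (Nat.ltb_spec (n + i) n); [lia|]. destruct (Nat.ltb_spec k n); [|lia].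
replace (n + i - n)%nat with i by lia. unfold md; ring.
Qed.

Lemma mvec_ext N A v w i : (forall k, (k < N)%nat -> v k = w k) -> mvec N A v i = mvec N A w i.
Proof. intros H; unfold mvec; apply sumR_ext; intros; rewrite H; auto. Qed.

Lemma mvec_mmul N A B v i : mvec N (mmul N A B) v i = mvec N A (mvec N B v) i.
Proof.
unfold mvec, mmul.
rewrite (sumR_ext N _ (fun k => sumR N (fun l => A i l * B l k * v k))).
2:{ intros; rewrite sumR_scal_r; reflexivity. }
rewrite sumR_swap. apply sumR_ext; intros l Hl. rewrite <- sumR_scal. apply sumR_ext; intros; ring.
Qed.

Lemma mvec_mmul_f N A B v : mvec N (mmul N A B) v = mvec N A (mvec N B v).
Proof. apply functional_extensionality; intros; apply mvec_mmul. Qed.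

Lemma entry_eq N A B C i j : mmul N (mmul N A B) (trans C) i j = mvec N A (mvec N B (fun l => C j l)) i.
Proof.
unfold trans. rewrite <- mvec_mmul. unfold mvec, mmul. reflexivity.
Qed.

Definition vrep (v p q : vec) := geq v p /\ geq (shift v) q.
Definition join (p q : vec) : vec := fun k => if Nat.ltb k n then p k else q (k - n)%nat.

Lemma vrep_join p q : vrep (join p q) p q.
Proof.
split; intros k Hk; unfold join, shift.
- destruct (Nat.ltb_spec k n); [reflexivity|lia].
- destruct (Nat.ltb_spec (n + k) n); [lia|]. f_equal; lia.
Qed.

Lemma vrep_self v : vrep v v (shift v).
Proof. split; reflexivity. Qed.

Lemma vrep_ext v w p q : (forall k, (k < 2 * n)%nat -> v k = w k) -> vrep w p q -> vrep v p q.
Proof.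
intros H [H1 H2]; split; intros k Hk; unfold shift in *.
- rewrite H by lia; apply H1; auto.
- rewrite H by lia; apply H2; auto.
Qed.

Lemma vrep_geq v p q p' q' : vrep v p q -> geq p p' -> geq q q' -> vrep v p' q'.
Proof. intros [H1 H2] E1 E2; split; [rewrite <- E1|rewrite <- E2]; auto. Qed.

Lemma vrep_add v w p q p' q' : vrep v p q -> vrep w p' q' ->
  vrep (fun k => v k + w k) (gadd p p') (gadd q q').
Proof.
intros [H1 H2] [H3 H4]; split; intros k Hk.
- unfold gadd; rewrite (H1 k Hk), (H3 k Hk); auto.
- specialize (H2 k Hk); specialize (H4 k Hk); unfold gadd, shift in *; rewrite H2, H4; auto.
Qed.

Lemma vrep_sub v w p q p' q' : vrep v p q -> vrep w p' q' ->
  vrep (fun k => v k - w k) (gsub p p') (gsub q q').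
Proof.
intros [H1 H2] [H3 H4]; split; intros k Hk.
- unfold gsub; rewrite (H1 k Hk), (H3 k Hk); auto.
- specialize (H2 k Hk); specialize (H4 k Hk); unfold gsub, shift in *; rewrite H2, H4; auto.
Qed.

Lemma vrep_scal c v p q : vrep v p q -> vrep (fun k => c * v k) (gmul (ge c) p) (gmul (ge c) q).
Proof.
intros [H1 H2]; split; intros k Hk; rewrite ge_mul by auto.
- rewrite (H1 k Hk); auto.
- specialize (H2 k Hk); unfold shift in *; rewrite H2; auto.
Qed.

Lemma vrep_entry v p q i : vrep v p q -> (i < 2 * n)%nat -> v i = join p q i.
Proof.
intros [H1 H2] Hi; unfold join. destruct (Nat.ltb_spec i n).
- apply H1; auto.
- replace i with (n + (i - n))%nat at 1 by lia. apply H2. lia.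
Qed.

Definition rinner (v w : vec) := sumR (2 * n) (fun k => v k * w k).

Lemma rinner_vrep v w p q p' q' : vrep v p q -> vrep w p' q' -> rinner v w = ginner p p' + ginner q q'.
Proof.
intros [H1 H2] [H3 H4]. unfold rinner. rewrite sum2n. f_equal; unfold ginner; apply sumR_ext; intros k Hk.
- rewrite H1, H3; auto.
- specialize (H2 k Hk); specialize (H4 k Hk); unfold shift in *; rewrite H2, H4; auto.
Qed.

Lemma row_from_adj A Aadj : (forall v w, rinner (mvec (2 * n) A v) w = rinner v (Aadj w)) ->
  forall j l, (j < 2 * n)%nat -> (l < 2 * n)%nat -> A j l = Aadj (unitv j) l.
Proof.
intros H j l Hj Hl. specialize (H (unitv l) (unitv j)). unfold rinner in H.
rewrite (sumR_ext _ _ (fun k => (if Nat.eqb k j then 1 else 0) * mvec (2 * n) A (unitv l) k)) in H.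
2:{ intros; unfold unitv; ring. }
rewrite (sumR_ext _ (fun k => unitv l k * _) (fun k => (if Nat.eqb k l then 1 else 0) * Aadj (unitv j) k)) in H.
2:{ intros; unfold unitv; ring. }
rewrite !sumR_delta in H by auto. rewrite <- H. unfold mvec.
rewrite (sumR_ext _ _ (fun k => (if Nat.eqb k l then 1 else 0) * A j k)).
2:{ intros; unfold unitv; ring. }
rewrite sumR_delta; auto.
Qed.

Lemma mvec_msub N A B v i : mvec N (msub A B) v i = mvec N A v i - mvec N B v i.
Proof. unfold mvec, msub. unfold Rminus at 2. rewrite <- sumR_opp, <- sumR_plus. apply sumR_ext; intros; ring. Qed.
Lemma mvec_mscal N c A v i : mvec N (mscal c A) v i = c * mvec N A v i.
Proof. unfold mvec, mscal. rewrite <- sumR_scal. apply sumR_ext; intros; ring. Qed.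

Lemma ge_mult a b : geq (ge (a * b)) (gmul (ge a) (ge b)).
Proof. rewrite ge_mul. intros k Hk. unfold ge. destruct (Nat.eqb k 0); ring. Qed.

Lemma sum_unitv N t v : (t < N)%nat -> sumR N (fun j => v j * unitv j t) = v t.
Proof.
intros Ht. rewrite <- (sumR_delta N t v Ht). apply sumR_ext; intros k Hk.
unfold unitv. rewrite Nat.eqb_sym. ring.
Qed.

Lemma J_lin v i k : sumR (2 * n) (fun j => v j * Jmat n (unitv j) i k) = Jmat n v i k.
Proof.
unfold Jmat, Xmat.
destruct (Nat.ltb i n); destruct (Nat.ltb k n).
- rewrite (sumR_ext _ _ (fun _ => 0)) by (intros; ring). apply sumR_zero.
- apply sum_unitv. pose proof (md_lt (i + (k - n))). unfold md in *. lia.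
- rewrite (sumR_ext _ _ (fun j => - (v j * unitv j ((i - n + k) mod n)))) by (intros; ring).
  rewrite sumR_opp, sum_unitv; auto. pose proof (md_lt (i - n + k)). unfold md in *. lia.
- rewrite (sumR_ext _ _ (fun _ => 0)) by (intros; ring). apply sumR_zero.
Qed.

Lemma fjac_act Hm y v i :
  mvec (2 * n) (fjac n Hm y) v i =
  mvec (2 * n) (Jmat n v) (gradH n Hm y) i + mvec (2 * n) (Jmat n y) (gradH n Hm v) i.
Proof.
unfold mvec, fjac, mmul, gradH, mvec.
rewrite (sumR_ext _ _ (fun j => sumR (2 * n) (fun k => v j * Jmat n (unitv j) i k * sumR (2 * n) (fun l => Hm k l * y l))
    + sumR (2 * n) (fun k => Jmat n y i k * Hm k j * v j))).
2:{ intros j Hj. rewrite Rmult_plus_distr_r. f_equal.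
    - rewrite Rmult_comm, <- sumR_scal. apply sumR_ext; intros; ring.
    - rewrite <- sumR_scal_r. reflexivity. }
rewrite sumR_plus. f_equal.
- rewrite sumR_swap. apply sumR_ext; intros k Hk.
  rewrite sumR_scal_r. f_equal. apply J_lin.
- rewrite sumR_swap. apply sumR_ext; intros k Hk.
  rewrite <- sumR_scal. apply sumR_ext; intros; ring.
Qed.

Section HS.
Variable Hm : mat.
Hypothesis Hadm : admissible n Hm.

Lemma A_lo i j : (i < n)%nat -> mmul (2 * n) (Ablock n) Hm i j = Hm (md (i + 1)) j.
Proof.
intros Hi. unfold mmul. rewrite sum2n.
rewrite (sumR_ext n (fun k => Ablock n i (n + k)%nat * _) (fun _ => 0)).
2:{ intros k Hk. unfold Ablock. destruct (Nat.ltb_spec i n); [|lia]. destruct (Nat.ltb_spec (n + k) n); [lia|]. ring. }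
rewrite sumR_zero, Rplus_0_r.
rewrite <- (sumR_delta n (md (i + 1)) (fun k => Hm k j)) by apply md_lt.
apply sumR_ext; intros k Hk. unfold Ablock, Pshift.
destruct (Nat.ltb_spec i n); [|lia]. destruct (Nat.ltb_spec k n); [|lia]. reflexivity.
Qed.

Lemma A_hi i j : (i < n)%nat -> mmul (2 * n) (Ablock n) Hm (n + i)%nat j = Hm (n + md (i + 1))%nat j.
Proof.
intros Hi. unfold mmul. rewrite sum2n.
rewrite (sumR_ext n (fun k => Ablock n (n + i)%nat k * _) (fun _ => 0)).
2:{ intros k Hk. unfold Ablock. destruct (Nat.ltb_spec (n + i) n); [lia|]. destruct (Nat.ltb_spec k n); [|lia]. ring. }
rewrite sumR_zero, Rplus_0_l.
rewrite <- (sumR_delta n (md (i + 1)) (fun k => Hm (n + k)%nat j)) by apply md_lt.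
apply sumR_ext; intros k Hk. unfold Ablock, Pshift.
destruct (Nat.ltb_spec (n + i) n); [lia|]. destruct (Nat.ltb_spec (n + k) n); [lia|].
replace (n + i - n)%nat with i by lia. replace (n + k - n)%nat with k by lia. reflexivity.
Qed.

Lemma AT_lo i j : (j < n)%nat -> mmul (2 * n) Hm (trans (Ablock n)) i j = Hm i (md (j + 1)).
Proof.
intros Hj. unfold mmul, trans. rewrite sum2n.
rewrite (sumR_ext n (fun k => Hm i (n + k)%nat * _) (fun _ => 0)).
2:{ intros k Hk. unfold Ablock. destruct (Nat.ltb_spec j n); [|lia]. destruct (Nat.ltb_spec (n + k) n); [lia|]. ring. }
rewrite sumR_zero, Rplus_0_r.
rewrite <- (sumR_delta n (md (j + 1)) (fun k => Hm i k)) by apply md_lt.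
apply sumR_ext; intros k Hk. unfold Ablock, Pshift.
destruct (Nat.ltb_spec j n); [|lia]. destruct (Nat.ltb_spec k n); [|lia]. unfold md; ring.
Qed.

Lemma AT_hi i j : (j < n)%nat -> mmul (2 * n) Hm (trans (Ablock n)) i (n + j)%nat = Hm i (n + md (j + 1))%nat.
Proof.
intros Hj. unfold mmul, trans. rewrite sum2n.
rewrite (sumR_ext n (fun k => Hm i k * _) (fun _ => 0)).
2:{ intros k Hk. unfold Ablock. destruct (Nat.ltb_spec (n + j) n); [lia|]. destruct (Nat.ltb_spec k n); [|lia]. ring. }
rewrite sumR_zero, Rplus_0_l.
rewrite <- (sumR_delta n (md (j + 1)) (fun k => Hm i (n + k)%nat)) by apply md_lt.
apply sumR_ext; intros k Hk. unfold Ablock, Pshift.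
destruct (Nat.ltb_spec (n + j) n); [lia|]. destruct (Nat.ltb_spec (n + k) n); [lia|].
replace (n + j - n)%nat with j by lia. replace (n + k - n)%nat with k by lia. unfold md; ring.
Qed.

Lemma H_shift bi bj i j : (bi = 0 \/ bi = n)%nat -> (bj = 0 \/ bj = n)%nat -> (i < n)%nat -> (j < n)%nat ->
  Hm (bi + md (i + 1))%nat (bj + j)%nat = Hm (bi + i)%nat (bj + md (j + 1))%nat.
Proof.
intros Hbi Hbj Hi Hj. destruct Hadm as [_ HA].
assert (E := HA (bi + i)%nat (bj + j)%nat ltac:(lia) ltac:(lia)).
destruct Hbi as [-> | ->]; destruct Hbj as [-> | ->]; simpl in *;
  rewrite ?A_lo, ?A_hi, ?AT_lo, ?AT_hi in E by auto; exact E.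
Qed.

Lemma H_struct bi bj : (bi = 0 \/ bi = n)%nat -> (bj = 0 \/ bj = n)%nat ->
  forall j i, (i < n)%nat -> (j < n)%nat -> Hm (bi + i)%nat (bj + j)%nat = Hm (bi + md (i + j))%nat bj.
Proof.
intros Hbi Hbj j. induction j; intros i Hi Hj.
- rewrite Nat.add_0_r, md_small by lia. rewrite Nat.add_0_r. reflexivity.
- replace (S j) with (md (j + 1)) by (rewrite md_small; lia).
  rewrite <- H_shift by (auto; lia).
  rewrite IHj by (try apply md_lt; lia).
  f_equal. f_equal. md_solve.
Qed.

Definition ha : vec := fun k => Hm k 0%nat.
Definition hb : vec := fun k => Hm k n.
Definition hc : vec := fun k => Hm (n + k)%nat n.

Lemma H11 i k : (i < n)%nat -> (k < n)%nat -> Hm i k = ha (md (i + k)).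
Proof. intros Hi Hk; unfold ha. pose proof (H_struct 0 0 (or_introl eq_refl) (or_introl eq_refl) k i Hi Hk) as E; simpl in E; exact E. Qed.
Lemma H12 i k : (i < n)%nat -> (k < n)%nat -> Hm i (n + k)%nat = hb (md (i + k)).
Proof. intros Hi Hk; unfold hb. pose proof (H_struct 0 n (or_introl eq_refl) (or_intror eq_refl) k i Hi Hk) as E; simpl in E; exact E. Qed.
Lemma H22 i k : (i < n)%nat -> (k < n)%nat -> Hm (n + i)%nat (n + k)%nat = hc (md (i + k)).
Proof. intros Hi Hk; unfold hc. pose proof (H_struct n n (or_intror eq_refl) (or_intror eq_refl) k i Hi Hk) as E; simpl in E; exact E. Qed.
Lemma H21 i k : (i < n)%nat -> (k < n)%nat -> Hm (n + i)%nat k = hb (md (i + k)).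
Proof.
intros Hi Hk. pose proof (H_struct n 0 (or_intror eq_refl) (or_introl eq_refl) k i Hi Hk) as E; simpl in E.
rewrite E. destruct Hadm as [HS _]. rewrite HS by (pose proof (md_lt (i + k)); lia).
rewrite H12 by (try apply md_lt; lia). simpl. rewrite md_md. reflexivity.
Qed.

Lemma H_lo v i : (i < n)%nat -> mvec (2 * n) Hm v i = gmul ha (gcj v) i + gmul hb (gcj (shift v)) i.
Proof.
intros Hi. unfold mvec. rewrite sum2n. rewrite <- !X1 by auto. unfold shift.
f_equal; apply sumR_ext; intros k Hk; [rewrite H11 | rewrite H12]; auto.
Qed.
Lemma H_hi v i : (i < n)%nat -> mvec (2 * n) Hm v (n + i)%nat = gmul hb (gcj v) i + gmul hc (gcj (shift v)) i.
Proof.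
intros Hi. unfold mvec. rewrite sum2n. rewrite <- !X1 by auto. unfold shift.
f_equal; apply sumR_ext; intros k Hk; [rewrite H21 | rewrite H22]; auto.
Qed.

Definition Hg1 p q := gadd (gmul ha (gcj p)) (gmul hb (gcj q)).
Definition Hg2 p q := gadd (gmul hb (gcj p)) (gmul hc (gcj q)).
Definition Jg1 (y p q : vec) := gmul y (gcj q).
Definition Jg2 (y p q : vec) := gopp (gmul y (gcj p)).
Definition al := gcj ha.
Definition be := gcj hb.
Definition ga := gcj hc.
Definition f11 y1 y2 := gadd (gmul (gadd be be) y1) (gmul ga y2).
Definition f12 (y1 y2 : vec) := gmul ga y1.
Definition f21 y1 y2 := gopp (gadd (gmul (gadd al al) y1) (gmul be y2)).
Definition f22 (y1 y2 : vec) := gopp (gmul be y1).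
Definition Fg1 y1 y2 p q := gadd (Jg1 p (Hg1 y1 y2) (Hg2 y1 y2)) (Jg1 y1 (Hg1 p q) (Hg2 p q)).
Definition Fg2 y1 y2 p q := gadd (Jg2 p (Hg1 y1 y2) (Hg2 y1 y2)) (Jg2 y1 (Hg1 p q) (Hg2 p q)).

Ltac gpush := repeat (rewrite ?gcj_add, ?gcj_opp, ?gcj_sub, ?gcj_mul, ?gcj_gcj, ?gcj_ge, ?gcj_g1).

Lemma Fg1_form y1 y2 p q : geq (Fg1 y1 y2 p q) (gadd (gmul (f11 y1 y2) p) (gmul (f12 y1 y2) q)).
Proof.
unfold Fg1, Jg1, Hg1, Hg2, f11, f12. gpush. unfold be, ga. ring.
Qed.

Lemma vrep_H v p q : vrep v p q -> vrep (mvec (2 * n) Hm v) (Hg1 p q) (Hg2 p q).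
Proof.
intros [H1 H2]; split; intros k Hk.
- rewrite H_lo by auto. unfold Hg1, gadd.
  rewrite (gmul_prop _ _ (reflexivity ha) _ _ (gcj_prop _ _ H1) k Hk).
  rewrite (gmul_prop _ _ (reflexivity hb) _ _ (gcj_prop _ _ H2) k Hk). reflexivity.
- unfold shift at 1. rewrite H_hi by auto. unfold Hg2, gadd.
  rewrite (gmul_prop _ _ (reflexivity hb) _ _ (gcj_prop _ _ H1) k Hk).
  rewrite (gmul_prop _ _ (reflexivity hc) _ _ (gcj_prop _ _ H2) k Hk). reflexivity.
Qed.

Lemma vrep_J y y1 v p q : geq y y1 -> vrep v p q -> vrep (mvec (2 * n) (Jmat n y) v) (Jg1 y1 p q) (Jg2 y1 p q).
Proof.
intros Hy [H1 H2]; split; intros k Hk.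
- rewrite J_lo by auto. unfold Jg1.
  apply (gmul_prop _ _ Hy _ _ (gcj_prop _ _ H2) k Hk).
- unfold shift at 1. rewrite J_hi by auto. unfold Jg2, gopp. f_equal.
  apply (gmul_prop _ _ Hy _ _ (gcj_prop _ _ H1) k Hk).
Qed.

Lemma vrep_F y y1 y2 v p q : vrep y y1 y2 -> vrep v p q ->
  vrep (mvec (2 * n) (fjac n Hm y) v) (Fg1 y1 y2 p q) (Fg2 y1 y2 p q).
Proof.
intros Hy Hv. eapply vrep_ext. { intros k Hk; apply fjac_act. }
unfold Fg1, Fg2. apply vrep_add.
- apply vrep_J; [apply Hv|]. apply vrep_H; auto.
- apply vrep_J; [apply Hy|]. apply vrep_H; auto.
Qed.

Definition Pig (c : R) (x1 p q : vec) : vec * vec :=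
 let j1 := Jg1 x1 p q in let j2 := Jg2 x1 p q in
 let h1 := Hg1 j1 j2 in let h2 := Hg2 j1 j2 in
 let k1 := Jg1 x1 h1 h2 in let k2 := Jg2 x1 h1 h2 in
 let l1 := Hg1 k1 k2 in let l2 := Hg2 k1 k2 in
 (gsub j1 (gmul (ge c) (Jg1 x1 l1 l2)), gsub j2 (gmul (ge c) (Jg2 x1 l1 l2))).

Lemma vrep_Pi eps x x1 x2 v p q : vrep x x1 x2 -> vrep v p q ->
  vrep (mvec (2 * n) (PiMat n Hm eps x) v) (fst (Pig (eps ^ 2) x1 p q)) (snd (Pig (eps ^ 2) x1 p q)).
Proof.
intros Hx Hv. unfold PiMat, Pig; simpl fst; simpl snd.
apply (vrep_ext _ (fun k => mvec (2 * n) (Jmat n x) v k - eps ^ 2 * mvec (2 * n) (Jmat n x)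
   (mvec (2 * n) Hm (mvec (2 * n) (Jmat n x) (mvec (2 * n) Hm (mvec (2 * n) (Jmat n x) v)))) k)).
{ intros k Hk; rewrite mvec_msub, mvec_mscal, !mvec_mmul_f. reflexivity. }
apply vrep_sub. { apply vrep_J; [apply Hx|auto]. }
apply vrep_scal.
apply vrep_J; [apply Hx|]. apply vrep_H. apply vrep_J; [apply Hx|]. apply vrep_H.
apply vrep_J; [apply Hx|auto].
Qed.

Section Key.
Variable E : vec.
Definition dl := gsub (gmul al ga) (gmul be be).
Definition mm y := gadd y (gmul (gmul E E) (gmul dl (gmul y (gmul y y)))).
Definition detP s r := gsub (gmul (gadd g1 (gmul E (f11 s r))) (gadd g1 (gmul E (f22 s r))))
                            (gmul (gmul E (f12 s r)) (gmul E (f21 s r))).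
Definition detK u w := gsub (gmul (gsub g1 (gmul E (f11 u w))) (gsub g1 (gmul E (f22 u w))))
                            (gmul (gmul E (f12 u w)) (gmul E (f21 u w))).
Definition Rel1 u w s r := gsub (gsub s (gmul E (gadd (gmul (f11 u w) s) (gmul (f12 u w) r)))) u.
Definition Rel2 u w s r := gsub (gsub r (gmul E (gadd (gmul (f21 u w) s) (gmul (f22 u w) r)))) w.

Lemma key_ring u w s r :
  geq (gsub (gmul (mm u) (detP s r)) (gmul (mm s) (detK u w)))
      (gadd (gmul (gopp (gadd g1 (gmul (gmul E E) (gmul dl (gadd (gsub (gmul u u) (gmul u s)) (gmul s s)))))) (Rel1 u w s r))
            (gmul (gmul (gmul E (gmul E E)) (gmul dl (gmul u (gmul s (gsub u s)))))
                  (gadd (gmul be (Rel1 u w s r)) (gmul ga (Rel2 u w s r))))).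
Proof.
unfold mm, detP, detK, Rel1, Rel2, f11, f12, f21, f22, dl. ring.
Qed.
End Key.
Lemma Pi_form eps x1 p q :
  geq (fst (Pig (eps ^ 2) x1 p q)) (gmul (mm (ge eps) x1) (gcj q)) /\
  geq (snd (Pig (eps ^ 2) x1 p q)) (gopp (gmul (mm (ge eps) x1) (gcj p))).
Proof.
unfold Pig; simpl fst; simpl snd. replace (eps ^ 2) with (eps * eps) by ring.
unfold mm, dl, Jg1, Jg2, Hg1, Hg2, al, be, ga. rewrite ge_mult.
replace (eps * 1) with eps by ring.
split; gpush; ring.
Qed.


Lemma Fg2_form y1 y2 p q : geq (Fg2 y1 y2 p q) (gadd (gmul (f21 y1 y2) p) (gmul (f22 y1 y2) q)).
Proof.
unfold Fg2, Jg2, Hg1, Hg2, f21, f22. gpush. unfold al, be. ring.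
Qed.

Definition F1' y1 y2 w1 w2 := gadd (gmul (gcj (f11 y1 y2)) w1) (gmul (gcj (f21 y1 y2)) w2).
Definition F2' y1 y2 w1 w2 := gadd (gmul (gcj (f12 y1 y2)) w1) (gmul (gcj (f22 y1 y2)) w2).

Lemma ginner_ge_l c p q : ginner (gmul (ge c) p) q = c * ginner p q.
Proof. rewrite (ginner_ext _ _ q q (ge_mul c p)) by reflexivity. unfold ginner. rewrite <- sumR_scal. apply sumR_ext; intros; ring. Qed.
Lemma ginner_ge_r c p q : ginner p (gmul (ge c) q) = c * ginner p q.
Proof. rewrite (ginner_ext p p _ _ (reflexivity p) (ge_mul c q)). unfold ginner. rewrite <- sumR_scal. apply sumR_ext; intros; ring. Qed.

Lemma ginner_sub_l p p' q : ginner (gsub p p') q = ginner p q - ginner p' q.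
Proof. unfold ginner, gsub. unfold Rminus at 2. rewrite <- sumR_opp, <- sumR_plus; apply sumR_ext; intros; ring. Qed.
Lemma ginner_sub_r p q q' : ginner p (gsub q q') = ginner p q - ginner p q'.
Proof. unfold ginner, gsub. unfold Rminus at 2. rewrite <- sumR_opp, <- sumR_plus; apply sumR_ext; intros; ring. Qed.

Lemma F_adj y1 y2 p q w1 w2 :
  ginner (Fg1 y1 y2 p q) w1 + ginner (Fg2 y1 y2 p q) w2 =
  ginner p (F1' y1 y2 w1 w2) + ginner q (F2' y1 y2 w1 w2).
Proof.
rewrite (ginner_ext _ _ w1 w1 (Fg1_form y1 y2 p q)) by reflexivity.
rewrite (ginner_ext _ _ w2 w2 (Fg2_form y1 y2 p q)) by reflexivity.
unfold F1', F2'. rewrite !ginner_add_l, !ginner_add_r, !gadj. ring.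
Qed.

Section Fin.
Variable eps : R.
Definition Pm (xt : vec) : mat := fun i j => idm i j + eps * fjac n Hm xt i j.

Lemma mvec_idm v i : (i < 2 * n)%nat -> mvec (2 * n) idm v i = v i.
Proof.
intros Hi; unfold mvec, idm. rewrite <- (sumR_delta (2 * n) i v Hi). apply sumR_ext; intros k Hk.
rewrite Nat.eqb_sym. reflexivity.
Qed.

Lemma vrep_P xt v p q : vrep v p q ->
  vrep (mvec (2 * n) (Pm xt) v) (gadd p (gmul (ge eps) (Fg1 xt (shift xt) p q)))
                                (gadd q (gmul (ge eps) (Fg2 xt (shift xt) p q))).
Proof.
intros Hv. apply (vrep_ext _ (fun k => v k + eps * mvec (2 * n) (fjac n Hm xt) v k)).
{ intros k Hk. unfold Pm. rewrite <- (mvec_idm v k Hk). unfold mvec. rewrite <- sumR_scal, <- sumR_plus.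
  apply sumR_ext; intros; ring. }
apply vrep_add; auto. apply vrep_scal. apply vrep_F; auto. apply vrep_self.
Qed.

Lemma vrep_K x v p q : vrep v p q ->
  vrep (mvec (2 * n) (kahanMat n Hm eps x) v) (gsub p (gmul (ge eps) (Fg1 x (shift x) p q)))
                                (gsub q (gmul (ge eps) (Fg2 x (shift x) p q))).
Proof.
intros Hv. apply (vrep_ext _ (fun k => v k - eps * mvec (2 * n) (fjac n Hm x) v k)).
{ intros k Hk. unfold kahanMat. rewrite mvec_msub, mvec_mscal, mvec_idm; auto. }
apply vrep_sub; auto. apply vrep_scal. apply vrep_F; auto. apply vrep_self.
Qed.

Definition Padj (xt w : vec) : vec :=
  join (gadd w (gmul (ge eps) (F1' xt (shift xt) w (shift w))))
       (gadd (shift w) (gmul (ge eps) (F2' xt (shift xt) w (shift w)))).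
Definition Kadj (x w : vec) : vec :=
  join (gsub w (gmul (ge eps) (F1' x (shift x) w (shift w))))
       (gsub (shift w) (gmul (ge eps) (F2' x (shift x) w (shift w)))).

Lemma P_adj xt v w : rinner (mvec (2 * n) (Pm xt) v) w = rinner v (Padj xt w).
Proof.
rewrite (rinner_vrep _ _ _ _ _ _ (vrep_P xt v _ _ (vrep_self v)) (vrep_self w)).
unfold Padj. rewrite (rinner_vrep _ _ _ _ _ _ (vrep_self v) (vrep_join _ _)).
rewrite !ginner_add_l, !ginner_add_r, !ginner_ge_l, !ginner_ge_r.
pose proof (F_adj xt (shift xt) v (shift v) w (shift w)). nra.
Qed.

Lemma K_adj x v w : rinner (mvec (2 * n) (kahanMat n Hm eps x) v) w = rinner v (Kadj x w).
Proof.
rewrite (rinner_vrep _ _ _ _ _ _ (vrep_K x v _ _ (vrep_self v)) (vrep_self w)).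
unfold Kadj. rewrite (rinner_vrep _ _ _ _ _ _ (vrep_self v) (vrep_join _ _)).
rewrite !ginner_sub_l, !ginner_sub_r, !ginner_ge_l, !ginner_ge_r.
pose proof (F_adj x (shift x) v (shift v) w (shift w)). nra.
Qed.


Definition Zlhs (xt x0 : vec) (j : nat) : vec * vec :=
  let e1 := unitv j in let e2 := shift (unitv j) in
  let W1 := gadd e1 (gmul (ge eps) (F1' xt (shift xt) e1 e2)) in
  let W2 := gadd e2 (gmul (ge eps) (F2' xt (shift xt) e1 e2)) in
  let Y1 := fst (Pig (eps ^ 2) x0 W1 W2) in let Y2 := snd (Pig (eps ^ 2) x0 W1 W2) in
  (gadd Y1 (gmul (ge eps) (Fg1 xt (shift xt) Y1 Y2)), gadd Y2 (gmul (ge eps) (Fg2 xt (shift xt) Y1 Y2))).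

Definition Zrhs (x x0 : vec) (j : nat) : vec * vec :=
  let e1 := unitv j in let e2 := shift (unitv j) in
  let W1 := gsub e1 (gmul (ge eps) (F1' x (shift x) e1 e2)) in
  let W2 := gsub e2 (gmul (ge eps) (F2' x (shift x) e1 e2)) in
  let Y1 := fst (Pig (eps ^ 2) x0 W1 W2) in let Y2 := snd (Pig (eps ^ 2) x0 W1 W2) in
  (gsub Y1 (gmul (ge eps) (Fg1 x (shift x) Y1 Y2)), gsub Y2 (gmul (ge eps) (Fg2 x (shift x) Y1 Y2))).

Lemma entry_P xt x0 i j : (i < 2 * n)%nat -> (j < 2 * n)%nat ->
  mmul (2 * n) (mmul (2 * n) (Pm xt) (PiMat n Hm eps x0)) (trans (Pm xt)) i j
  = join (fst (Zlhs xt x0 j)) (snd (Zlhs xt x0 j)) i.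
Proof.
intros Hi Hj. rewrite entry_eq.
rewrite (mvec_ext _ _ _ (mvec (2 * n) (PiMat n Hm eps x0) (Padj xt (unitv j)))).
2:{ intros k Hk. apply mvec_ext. intros l Hl. apply (row_from_adj _ _ (P_adj xt)); auto. }
apply vrep_entry; auto. unfold Zlhs; simpl fst; simpl snd.
apply vrep_P. apply (vrep_Pi eps x0 x0 (shift x0)). apply vrep_self. unfold Padj. apply vrep_join.
Qed.

Lemma entry_K x x0 i j : (i < 2 * n)%nat -> (j < 2 * n)%nat ->
  mmul (2 * n) (mmul (2 * n) (kahanMat n Hm eps x) (PiMat n Hm eps x0)) (trans (kahanMat n Hm eps x)) i j
  = join (fst (Zrhs x x0 j)) (snd (Zrhs x x0 j)) i.
Proof.
intros Hi Hj. rewrite entry_eq.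
rewrite (mvec_ext _ _ _ (mvec (2 * n) (PiMat n Hm eps x0) (Kadj x (unitv j)))).
2:{ intros k Hk. apply mvec_ext. intros l Hl. apply (row_from_adj _ _ (K_adj x)); auto. }
apply vrep_entry; auto. unfold Zrhs; simpl fst; simpl snd.
apply vrep_K. apply (vrep_Pi eps x0 x0 (shift x0)). apply vrep_self. unfold Kadj. apply vrep_join.
Qed.

Lemma L_form u s r e1 e2 :
  let W1 := gadd e1 (gmul (ge eps) (F1' s r e1 e2)) in
  let W2 := gadd e2 (gmul (ge eps) (F2' s r e1 e2)) in
  geq (gadd (fst (Pig (eps ^ 2) u W1 W2)) (gmul (ge eps) (Fg1 s r (fst (Pig (eps ^ 2) u W1 W2)) (snd (Pig (eps ^ 2) u W1 W2)))))
      (gmul (gmul (mm (ge eps) u) (detP (ge eps) s r)) (gcj e2)) /\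
  geq (gadd (snd (Pig (eps ^ 2) u W1 W2)) (gmul (ge eps) (Fg2 s r (fst (Pig (eps ^ 2) u W1 W2)) (snd (Pig (eps ^ 2) u W1 W2)))))
      (gopp (gmul (gmul (mm (ge eps) u) (detP (ge eps) s r)) (gcj e1))).
Proof.
intros W1 W2. destruct (Pi_form eps u W1 W2) as [P1 P2].
rewrite Fg1_form, Fg2_form, P1, P2. unfold W1, W2, F1', F2', detP, f11, f12, f21, f22.
split; gpush; ring.
Qed.

Lemma R_form u w s e1 e2 :
  let W1 := gsub e1 (gmul (ge eps) (F1' u w e1 e2)) in
  let W2 := gsub e2 (gmul (ge eps) (F2' u w e1 e2)) in
  geq (gsub (fst (Pig (eps ^ 2) s W1 W2)) (gmul (ge eps) (Fg1 u w (fst (Pig (eps ^ 2) s W1 W2)) (snd (Pig (eps ^ 2) s W1 W2)))))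
      (gmul (gmul (mm (ge eps) s) (detK (ge eps) u w)) (gcj e2)) /\
  geq (gsub (snd (Pig (eps ^ 2) s W1 W2)) (gmul (ge eps) (Fg2 u w (fst (Pig (eps ^ 2) s W1 W2)) (snd (Pig (eps ^ 2) s W1 W2)))))
      (gopp (gmul (gmul (mm (ge eps) s) (detK (ge eps) u w)) (gcj e1))).
Proof.
intros W1 W2. destruct (Pi_form eps s W1 W2) as [P1 P2].
rewrite Fg1_form, Fg2_form, P1, P2. unfold W1, W2, F1', F2', detK, f11, f12, f21, f22.
split; gpush; ring.
Qed.

Lemma join_geq p q p' q' i : geq p p' -> geq q q' -> (i < 2 * n)%nat -> join p q i = join p' q' i.
Proof.
intros H1 H2 Hi; unfold join. destruct (Nat.ltb_spec i n); [apply H1; auto|apply H2; lia].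
Qed.

Lemma core x xt :
  (forall i, (i < 2 * n)%nat -> mvec (2 * n) (kahanMat n Hm eps x) xt i = x i) ->
  forall i j, (i < 2 * n)%nat -> (j < 2 * n)%nat ->
  mmul (2 * n) (mmul (2 * n) (Pm xt) (PiMat n Hm eps x)) (trans (Pm xt)) i j =
  mmul (2 * n) (mmul (2 * n) (kahanMat n Hm eps x) (PiMat n Hm eps xt)) (trans (kahanMat n Hm eps x)) i j.
Proof.
intros Hrel i j Hi Hj.
assert (HV : vrep x (gsub xt (gmul (ge eps) (Fg1 x (shift x) xt (shift xt))))
                    (gsub (shift xt) (gmul (ge eps) (Fg2 x (shift x) xt (shift xt))))).
{ eapply vrep_ext; [|apply vrep_K, vrep_self]. intros k Hk; rewrite Hrel; auto. }
destruct HV as [HV1 HV2].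
assert (R1 : geq (Rel1 (ge eps) x (shift x) xt (shift xt)) g0).
{ unfold Rel1. etransitivity. { apply gsub_prop; [reflexivity|exact HV1]. } rewrite Fg1_form. ring. }
assert (R2 : geq (Rel2 (ge eps) x (shift x) xt (shift xt)) g0).
{ unfold Rel2. etransitivity. { apply gsub_prop; [reflexivity|exact HV2]. } rewrite Fg2_form. ring. }
assert (KEY : geq (gmul (mm (ge eps) x) (detP (ge eps) xt (shift xt)))
                  (gmul (mm (ge eps) xt) (detK (ge eps) x (shift x)))).
{ pose proof (key_ring (ge eps) x (shift x) xt (shift xt)) as KR.
  rewrite R1, R2 in KR.
  setoid_replace (gmul (mm (ge eps) x) (detP (ge eps) xt (shift xt))) with
    (gadd (gsub (gmul (mm (ge eps) x) (detP (ge eps) xt (shift xt))) (gmul (mm (ge eps) xt) (detK (ge eps) x (shift x))))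
          (gmul (mm (ge eps) xt) (detK (ge eps) x (shift x)))) by ring.
  rewrite KR. ring. }
rewrite entry_P, entry_K by auto.
destruct (L_form x xt (shift xt) (unitv j) (shift (unitv j))) as [L1 L2].
destruct (R_form x (shift x) xt (unitv j) (shift (unitv j))) as [Q1 Q2].
apply join_geq; auto; unfold Zlhs, Zrhs; simpl fst; simpl snd.
- rewrite L1, Q1, KEY. reflexivity.
- rewrite L2, Q2, KEY. reflexivity.
Qed.
End Fin.
End HS.

End G.

Definition meq N (A B : mat) := forall i j, (i < N)%nat -> (j < N)%nat -> A i j = B i j.

Lemma meq_equiv N : Equivalence (meq N).
Proof.
split; unfold meq.
- intros A i j; reflexivity.
- intros A B H i j Hi Hj; rewrite H; auto.
- intros A B C H1 H2 i j Hi Hj; rewrite H1, H2; auto.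
Qed.
Global Existing Instance meq_equiv.

Global Instance mmul_proper N : Proper (meq N ==> meq N ==> meq N) (mmul N).
Proof.
intros A A' HA B B' HB i j Hi Hj; unfold mmul; apply sumR_ext; intros k Hk; rewrite HA, HB; auto.
Qed.
Global Instance trans_proper N : Proper (meq N ==> meq N) trans.
Proof. intros A A' HA i j Hi Hj; unfold trans; apply HA; auto. Qed.

Lemma mmul_assoc N A B C : meq N (mmul N (mmul N A B) C) (mmul N A (mmul N B C)).
Proof.
intros i j Hi Hj; unfold mmul.
rewrite (sumR_ext N _ (fun k => sumR N (fun l => A i l * B l k * C k j))).
2:{ intros; rewrite sumR_scal_r; reflexivity. }
rewrite sumR_swap. apply sumR_ext; intros l Hl. rewrite <- sumR_scal. apply sumR_ext; intros; ring.
Qed.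

Lemma trans_mmul N A B : meq N (trans (mmul N A B)) (mmul N (trans B) (trans A)).
Proof. intros i j Hi Hj; unfold trans, mmul; apply sumR_ext; intros; ring. Qed.

Lemma mmul_idm_l N B : meq N (mmul N idm B) B.
Proof.
intros i j Hi Hj; unfold mmul, idm.
rewrite <- (sumR_delta N i (fun k => B k j) Hi). apply sumR_ext; intros; rewrite Nat.eqb_sym; reflexivity.
Qed.

Lemma mmul_idm_r N B : meq N (mmul N B idm) B.
Proof.
intros i j Hi Hj; unfold mmul, idm.
rewrite <- (sumR_delta N j (fun k => B i k) Hj). apply sumR_ext; intros; ring.
Qed.

Lemma trans_idm N : meq N (trans idm) idm.
Proof. intros i j Hi Hj; unfold trans, idm; rewrite Nat.eqb_sym; reflexivity. Qed.

Lemma deriv_local_unique f g l1 l2 d : 0 < d -> (forall t, Rabs t < d -> f t = g t) ->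
  derivable_pt_lim f 0 l1 -> derivable_pt_lim g 0 l2 -> l1 = l2.
Proof.
intros Hd Heq H1 H2. apply (uniqueness_limite g 0); auto.
intros e He. destruct (H1 e He) as [del Hdel].
assert (Hm : 0 < Rmin del d) by (apply Rmin_pos; [apply (cond_pos del)|auto]).
exists (mkposreal _ Hm). intros h Hh0 Hh. simpl in Hh.
rewrite <- !Heq.
- apply Hdel; auto. apply Rlt_le_trans with (1 := Hh). apply Rmin_l.
- rewrite Rabs_R0; auto.
- rewrite Rplus_0_l. apply Rlt_le_trans with (1 := Hh). apply Rmin_r.
Qed.

Lemma deriv_sum N (F : nat -> R -> R) (L : nat -> R) :
  (forall k, (k < N)%nat -> derivable_pt_lim (F k) 0 (L k)) ->
  derivable_pt_lim (fun t => sumR N (fun k => F k t)) 0 (sumR N L).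
Proof.
induction N; intros H; simpl.
- apply derivable_pt_lim_const.
- apply (derivable_pt_lim_plus (fun t => sumR N (fun k => F k t)) (F N)).
  + apply IHN; intros; apply H; lia.
  + apply H; lia.
Qed.

Lemma deriv_aff a b : derivable_pt_lim (fun t => a - t * b) 0 (- b).
Proof.
intros e He. exists (mkposreal _ Rlt_0_1). intros h Hh _.
replace ((a - (0 + h) * b - (a - 0 * b)) / h - - b) with 0 by (field; auto).
rewrite Rabs_R0; auto.
Qed.

Lemma deriv_if a (b : bool) : derivable_pt_lim (fun t => a + (if b then t else 0)) 0 (if b then 1 else 0).
Proof.
intros e He. exists (mkposreal _ Rlt_0_1). intros h Hh _.
destruct b.
- replace ((a + (0 + h) - (a + 0)) / h - 1) with 0 by (field; auto). rewrite Rabs_R0; auto.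
- replace ((a + 0 - (a + 0)) / h - 0) with 0 by (field; auto). rewrite Rabs_R0; auto.
Qed.

Lemma Jmat_lin n x e t a b : Jmat n (fun k => x k + t * e k) a b = Jmat n x a b + t * Jmat n e a b.
Proof. unfold Jmat, Xmat. destruct (Nat.ltb a n); destruct (Nat.ltb b n); ring. Qed.

Lemma fjac_lin n Hm x e t i k : fjac n Hm (fun k => x k + t * e k) i k = fjac n Hm x i k + t * fjac n Hm e i k.
Proof.
unfold fjac, gradH, mvec, mmul.
rewrite (sumR_ext _ (fun l => Jmat n (fun k => x k + t * e k) i l * Hm l k)
   (fun l => Jmat n x i l * Hm l k + t * (Jmat n e i l * Hm l k))) by (intros; rewrite Jmat_lin; ring).
rewrite (sumR_ext _ (fun l => Jmat n (unitv k) i l * sumR (2 * n) (fun m => Hm l m * (x m + t * e m)))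
   (fun l => Jmat n (unitv k) i l * sumR (2 * n) (fun m => Hm l m * x m) + t * (Jmat n (unitv k) i l * sumR (2 * n) (fun m => Hm l m * e m)))).
2:{ intros l Hl. rewrite (sumR_ext _ _ (fun m => Hm l m * x m + t * (Hm l m * e m))) by (intros; ring).
    rewrite sumR_plus, sumR_scal. ring. }
rewrite !sumR_plus, !sumR_scal. ring.
Qed.

Lemma mvec_unitv N A j i : (j < N)%nat -> mvec N A (unitv j) i = A i j.
Proof.
intros Hj; unfold mvec, unitv. rewrite <- (sumR_delta N j (fun k => A i k) Hj). apply sumR_ext; intros; ring.
Qed.

Lemma KD_lemma n (Hn : (0 < n)%nat) Hm eps Phi x D (HPhi : isKahanMap n Hm eps Phi)
  (Hdef : invertible (2 * n) (kahanMat n Hm eps x)) (HD : isJacobian n Phi x D) :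
  forall i j, (i < 2 * n)%nat -> (j < 2 * n)%nat ->
  mmul (2 * n) (kahanMat n Hm eps x) D i j = Pm n Hm eps (Phi x) i j.
Proof.
intros i j Hi Hj.
set (K := kahanMat n Hm eps x). set (B := fun a b => eps * fjac n Hm (unitv j) a b).
set (y := fun t => fun k => x k + (if Nat.eqb k j then t else 0)).
assert (Hy : forall t, y t = (fun k => x k + t * unitv j k)).
{ intros t; apply functional_extensionality; intros k; unfold y, unitv; destruct (Nat.eqb k j); ring. }
assert (HK : forall t, kahanMat n Hm eps (y t) = (fun a b => K a b - t * B a b)).
{ intros t; apply functional_extensionality; intros a; apply functional_extensionality; intros b.
  unfold K, B, kahanMat, msub, mscal. rewrite Hy, fjac_lin. ring. }
destruct (MC.inv_near_mc (2 * n) K B Hdef) as [d [Hd Hinv]].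
assert (Heq : forall t, Rabs t < d -> sumR (2 * n) (fun k => (K i k - t * B i k) * Phi (y t) k)
                                      = x i + (if Nat.eqb i j then t else 0)).
{ intros t Ht. pose proof (HPhi (y t)) as H. rewrite HK in H. specialize (H (Hinv t Ht) i Hi).
  unfold mvec in H. rewrite H. unfold y. reflexivity. }
assert (Hd1 : forall k, (k < 2 * n)%nat -> derivable_pt_lim (fun t => (K i k - t * B i k) * Phi (y t) k) 0
                  (- B i k * Phi (y 0) k + (K i k - 0 * B i k) * D k j)).
{ intros k Hk. apply (derivable_pt_lim_mult (fun t => K i k - t * B i k) (fun t => Phi (y t) k)).
  - apply deriv_aff.
  - apply (HD k j Hk Hj). }
pose proof (deriv_local_unique _ _ _ _ d Hd Heq (deriv_sum (2 * n) _ _ Hd1) (deriv_if (x i) (Nat.eqb i j))) as Hder.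
assert (Hy0 : y 0 = x). { apply functional_extensionality; intros k; unfold y; destruct (Nat.eqb k j); ring. }
rewrite Hy0 in Hder.
rewrite (sumR_ext _ _ (fun k => - (B i k * Phi x k) + K i k * D k j)) in Hder by (intros; ring).
rewrite sumR_plus, sumR_opp in Hder.
assert (Hsym : sumR (2 * n) (fun k => B i k * Phi x k) = eps * fjac n Hm (Phi x) i j).
{ unfold B. rewrite (sumR_ext _ _ (fun k => eps * (fjac n Hm (unitv j) i k * Phi x k))) by (intros; ring).
  rewrite sumR_scal. f_equal. fold (mvec (2 * n) (fjac n Hm (unitv j)) (Phi x) i).
  rewrite (fjac_act n Hn), <- (mvec_unitv (2 * n) (fjac n Hm (Phi x)) j i Hj), (fjac_act n Hn). ring. }
unfold mmul, Pm, idm. fold K. lra.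
Qed.

Theorem mainTheorem6 (n : nat) (Hn : (2 <= n)%nat) (Hm : mat)
  (Hadm : admissible n Hm) (eps : R) (Phi : vec -> vec)
  (HPhi : isKahanMap n Hm eps Phi) (x : vec)
  (Hdef : invertible (2*n) (kahanMat n Hm eps x)) (D : mat)
  (HD : isJacobian n Phi x D) :
  forall i j, (i < 2*n)%nat -> (j < 2*n)%nat ->
    mmul (2*n) (mmul (2*n) D (PiMat n Hm eps x)) (trans D) i j
    = PiMat n Hm eps (Phi x) i j.
Proof.
assert (Hn0 : (0 < n)%nat) by lia.
set (N := (2 * n)%nat).
destruct Hdef as [M HM].
set (K := kahanMat n Hm eps x). set (P := Pm n Hm eps (Phi x)).
assert (HMK : meq N (mmul N M K) idm) by (intros a b Ha Hb; apply HM; auto).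
assert (HKD : meq N (mmul N K D) P) by (intros a b Ha Hb; apply KD_lemma; auto; exists M; auto).
assert (Hrel : forall i, (i < 2 * n)%nat -> mvec (2 * n) K (Phi x) i = x i).
{ intros i Hi. apply HPhi; auto. exists M; auto. }
assert (HC : meq N (mmul N (mmul N P (PiMat n Hm eps x)) (trans P))
                   (mmul N (mmul N K (PiMat n Hm eps (Phi x))) (trans K))).
{ intros a b Ha Hb. apply (core n Hn0 Hm Hadm eps x (Phi x) Hrel); auto. }
assert (HDe : meq N D (mmul N M P)).
{ rewrite <- HKD, <- mmul_assoc, HMK, mmul_idm_l. reflexivity. }
intros i j Hi Hj. revert i j Hi Hj. fold N.
change (meq N (mmul N (mmul N D (PiMat n Hm eps x)) (trans D)) (PiMat n Hm eps (Phi x))).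
rewrite HDe.
rewrite trans_mmul.
rewrite (mmul_assoc N M P), (mmul_assoc N M), <- (mmul_assoc N (mmul N P (PiMat n Hm eps x)) (trans P) (trans M)).
rewrite HC, (mmul_assoc N (mmul N K (PiMat n Hm eps (Phi x))) (trans K) (trans M)).
rewrite <- (trans_mmul N M K), HMK, trans_idm, mmul_idm_r, <- mmul_assoc, HMK, mmul_idm_l.
reflexivity.
Qed.
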